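(* Let $E$ be an effect algebra. Consider the functor $\mathbf{EA}\to E\downarrow\mathbf{EA}$ sending an effect algebra $F$ to the object $\iota_{E,F}\colon E\to E\otimes F$, $a\mapsto a\otimes 1$ (and a homomorphism $g\colon F\to F'$ to $\mathrm{id}_E\otimes g$). This functor admits a right adjoint which sends an object $h\colon E\to G$ of $E\downarrow\mathbf{EA}$ to the effect algebra $[E,G]_h$. Concretely, morphisms $\iota_{E,F}\to h$ in $E\downarrow\mathbf{EA}$ are in natural bijection with effect algebra homomorphisms $F\to[E,G]_h$, where a bimorphism $\beta\colon E\times F\to G$ with $\beta(a,1)=h(a)$ corresponds to $b\mapsto\beta(-,b)$.
   Context: Effect algebras: partial algebras $(E;\oplus,',0,1)$ with $\oplus$ commutative and associative (Kleene identities), $a\oplus b=1$ iff $b=a'$, $a\oplus 1$ defined iff $a=0$. $\mathbf{EA}$ is the category of effect algebras with homomorphisms (maps preserving existing orthosums and $1$). A bihomomorphism $\beta\colon E\times F\to G$ is a map such that each $\beta(a,-)$, $\beta(-,b)$ preserves existing orthosums (and $0$) and $\beta(1,1)=1$. The tensor product $E\otimes F$ is an effect algebra with a bihomomorphism $\otimes\colon E\times F\to E\otimes F$ through which every bihomomorphism $E\times F\to G$ factors uniquely via an effect algebra homomorphism; it exists for all $E,F$. $E\downarrow\mathbf{EA}$ is the under category: objects are homomorphisms $E\to G$, morphisms $(f\colon E\to G)\to(f'\colon E\to G')$ are homomorphisms $k\colon G\to G'$ with $k\circ f=f'$. For $h\colon E\to G$, $[E,G]_h$ is the set of maps $g\colon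 E\to G$ with $g(0)=0$ preserving existing orthosums and with $g(a)\le h(a)$ for all $a$; it is an effect algebra under pointwise partial sum with top element $h$ and $g'=h\ominus g$ pointwise. *)

(* Defs.v *)
From Stdlib Require Import Classical.

(* A partial algebra (E; (+), 0, 1).  [osum E a b c] means: a (+) b is
   defined and equals c. *)
Record PA := { car :> Type; osum : car -> car -> car -> Prop;
               ezero : car; eone : car }.

(* Effect algebra axioms. The orthosupplement a' is the unique b with
   a (+) b = 1 ; 0 = 1'. *)
Definition is_EA (E : PA) : Prop :=
  (forall a b c c', osum E a b c -> osum E a b c' -> c = c') /\
  (forall a b c, osum E a b c -> osum E b a c) /\
  (forall a b c ab abc, osum E a b ab -> osum E ab c abc ->
     exists bc, osum E b c bc /\ osum E a bc abc) /\
  (forall a, exists! b, osum E a b (eone E)) /\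
  osum E (eone E) (ezero E) (eone E) /\
  (forall a c, osum E a (eone E) c -> a = ezero E).

Record EA := { ea :> PA; ea_ax : is_EA ea }.

Definition ole (E : PA) (a b : E) : Prop := exists c, osum E a c b.

Definition is_hom (E F : PA) (f : E -> F) : Prop :=
  f (eone E) = eone F /\
  (forall a b c, osum E a b c -> osum F (f a) (f b) (f c)).

Definition is_bihom (E F G : PA) (beta : E -> F -> G) : Prop :=
  (forall a, beta a (ezero F) = ezero G /\
     forall b c d, osum F b c d -> osum G (beta a b) (beta a c) (beta a d)) /\
  (forall b, beta (ezero E) b = ezero G /\
     forall a c d, osum E a c d -> osum G (beta a b) (beta c b) (beta d b)) /\
  beta (eone E) (eone F) = eone G.

Definition is_tensor (E F T : EA) (t : E -> F -> T) : Prop :=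
  is_bihom E F T t /\
  forall (G : EA) (beta : E -> F -> G), is_bihom E F G beta ->
    exists! k : T -> G, is_hom T G k /\ forall a b, k (t a b) = beta a b.

Lemma ea_compl_zero (E : EA) (x y : E) :
  osum E x y (eone E) -> osum E y (ezero E) y.
Proof.
  destruct (ea_ax E) as [Hf [Hc [Ha [Hu [H10 Hz]]]]].
  intro Hxy.
  destruct (Ha _ _ _ _ _ Hxy H10) as [bc [H1 H2]].
  destruct (Hu x) as [u [Hu1 Hu2]].
  assert (bc = y) as ->.
  { transitivity u; [symmetry|]; apply Hu2; assumption. }
  exact H1.
Qed.

Lemma ea_sum0 (E : EA) (a : E) : osum E a (ezero E) a.
Proof.
  destruct (ea_ax E) as [Hf [Hc [Ha [Hu [H10 Hz]]]]].
  destruct (Hu a) as [a' [Ha' _]].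
  apply (ea_compl_zero E a'). apply Hc; exact Ha'.
Qed.

Lemma ea_idem0 (E : EA) (x : E) : osum E x x x -> x = ezero E.
Proof.
  destruct (ea_ax E) as [Hf [Hc [Ha [Hu [H10 Hz]]]]].
  intro Hxx.
  destruct (Hu x) as [x' [Hx' _]].
  destruct (Ha _ _ _ _ _ Hxx Hx') as [bc [H1 H2]].
  assert (bc = eone E) as -> by (eapply Hf; eassumption).
  eapply Hz; exact H2.
Qed.

Lemma hom_zero (E G : EA) (h : E -> G) :
  is_hom E G h -> h (ezero E) = ezero G.
Proof.
  intros [_ Hs]. apply ea_idem0. apply Hs. apply ea_sum0.
Qed.

Definition in_Hh (E G : EA) (h : E -> G) (g : E -> G) : Prop :=
  g (ezero E) = ezero G /\
  (forall a b c, osum E a b c -> osum G (g a) (g b) (g c)) /\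
  (forall a, ole G (g a) (h a)).

Lemma in_Hh_zero (E G : EA) (h : E -> G) :
  in_Hh E G h (fun _ => ezero G).
Proof.
  destruct (ea_ax G) as [Hf [Hc _]].
  split; [reflexivity|split].
  - intros; apply ea_sum0.
  - intro a. exists (h a). apply Hc, ea_sum0.
Qed.

Lemma in_Hh_top (E G : EA) (h : E -> G) :
  is_hom E G h -> in_Hh E G h h.
Proof.
  intro Hh. split; [apply hom_zero; exact Hh|split].
  - apply Hh.
  - intro a. exists (ezero G). apply ea_sum0.
Qed.

Definition Hh_PA (E G : EA) (h : E -> G) (Hh : is_hom E G h) : PA :=
  {| car := { g : E -> G | in_Hh E G h g };
     osum := fun x y z => forall a,
       osum G (proj1_sig x a) (proj1_sig y a) (proj1_sig z a);
     ezero := exist _ (fun _ => ezero G) (in_Hh_zero E G h);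
     eone := exist _ h (in_Hh_top E G h Hh) |}.

(* Main.v *)
Require Import Defs.
From Stdlib Require Import Classical FunctionalExtensionality ProofIrrelevance ClassicalEpsilon.

Section G.
Variable G : EA.

Lemma g_fn (a b c c' : G) : osum G a b c -> osum G a b c' -> c = c'.
Proof. destruct (ea_ax G) as [Hf _]. apply Hf. Qed.
Lemma g_cm (a b c : G) : osum G a b c -> osum G b a c.
Proof. destruct (ea_ax G) as [_ [Hc _]]. apply Hc. Qed.
Lemma g_as (a b c ab abc : G) : osum G a b ab -> osum G ab c abc ->
     exists bc, osum G b c bc /\ osum G a bc abc.
Proof. destruct (ea_ax G) as [_ [_ [Ha _]]]. apply Ha. Qed.

Lemma g_ra (a b c bc s : G) : osum G b c bc -> osum G a bc s ->
  exists ab, osum G a b ab /\ osum G ab c s.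
Proof.
  intros H1 H2. apply g_cm in H2. apply g_cm in H1.
  destruct (g_as _ _ _ _ _ H1 H2) as [ba [H3 H4]].
  exists ba. split; [apply g_cm; exact H3| apply g_cm; exact H4].
Qed.

Lemma g_ex (a b c d ab cd s : G) : osum G a b ab -> osum G c d cd -> osum G ab cd s ->
  exists ac bd, osum G a c ac /\ osum G b d bd /\ osum G ac bd s.
Proof.
  intros H1 H2 H3.
  destruct (g_as _ _ _ _ _ H1 H3) as [bcd [H4 H5]].
  apply g_cm in H4.
  destruct (g_as _ _ _ _ _ H2 H4) as [db [H6 H7]].
  destruct (g_ra _ _ _ _ _ H7 H5) as [ac [H8 H9]].
  exists ac, db. split; [exact H8|split; [apply g_cm; exact H6|exact H9]].
Qed.

Lemma g_cancel (a b b' c : G) : osum G a b c -> osum G a b' c -> b = b'.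
Proof.
  destruct (ea_ax G) as [_ [_ [_ [Hu _]]]].
  intros H1 H2. destruct (Hu c) as [c' [Hc' _]].
  destruct (g_as _ _ _ _ _ H1 Hc') as [x [Hx1 Hx2]].
  destruct (g_as _ _ _ _ _ H2 Hc') as [y [Hy1 Hy2]].
  destruct (Hu a) as [a' [_ Ha']].
  assert (x = y) as <- by (transitivity a'; [symmetry|]; apply Ha'; assumption).
  apply g_cm in Hx2.
  destruct (g_as _ _ _ _ _ Hx1 Hx2) as [u [Hu1 Hu2]].
  destruct (g_as _ _ _ _ _ Hy1 Hx2) as [v [Hv1 Hv2]].
  assert (u = v) as <- by (eapply g_fn; eassumption).
  destruct (Hu u) as [w [_ Hw]].
  transitivity w; [symmetry|]; apply Hw; apply g_cm; assumption.
Qed.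

Lemma g_pos (x d : G) : osum G x d (ezero G) -> x = ezero G.
Proof.
  destruct (ea_ax G) as [_ [_ [_ [_ [H10 Hz]]]]].
  intro H. apply g_cm in H10.
  destruct (g_as _ _ _ _ _ H H10) as [d1 [Hd1 Hd2]].
  apply Hz in Hd1. subst d.
  eapply g_fn; [apply ea_sum0|exact H].
Qed.

Lemma g_le_trans (a b c : G) : ole G a b -> ole G b c -> ole G a c.
Proof.
  intros [x Hx] [y Hy]. destruct (g_as _ _ _ _ _ Hx Hy) as [z [_ Hz]].
  exists z; exact Hz.
Qed.
End G.

Lemma Hh_ext (E G : EA) (h : E -> G) (Hh : is_hom E G h) (x y : Hh_PA E G h Hh) :
  (forall a, proj1_sig x a = proj1_sig y a) -> x = y.
Proof.
  destruct x as [f pf], y as [g pg]; simpl; intro H.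
  assert (f = g) by (apply functional_extensionality; exact H). subst g.
  f_equal. apply proof_irrelevance.
Qed.

Lemma Hh_is_EA (E G : EA) (h : E -> G) (Hh : is_hom E G h) : is_EA (Hh_PA E G h Hh).
Proof.
  unfold is_EA. simpl.
  split; [|split; [|split; [|split; [|split]]]].
  - intros x y z z' H1 H2. apply (Hh_ext E G h Hh). intro a. eapply g_fn; eauto.
  - intros x y z H a. apply g_cm; auto.
  - intros x y z xy xyz H1 H2.
    assert (Hc : forall a, exists w, osum G (proj1_sig y a) (proj1_sig z a) w /\
                  osum G (proj1_sig x a) w (proj1_sig xyz a))
      by (intro a; eapply g_as; eauto).
    set (bc := fun a => proj1_sig (constructive_indefinite_description _ (Hc a))).
    assert (Hbc : forall a, osum G (proj1_sig y a) (proj1_sig z a) (bc a) /\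
                  osum G (proj1_sig x a) (bc a) (proj1_sig xyz a))
      by (intro a; unfold bc; exact (proj2_sig (constructive_indefinite_description _ (Hc a)))).
    destruct x as [x [x0 [xs xl]]], y as [y [y0 [ys yl]]], z as [z [z0 [zs zl]]],
      xyz as [w [w0 [ws wl]]]; simpl in *.
    assert (Hin : in_Hh E G h bc).
    { split; [|split].
      - destruct (Hbc (ezero E)) as [B _]. rewrite y0, z0 in B.
        eapply g_fn; [exact B| apply ea_sum0].
      - intros a1 a2 a3 H.
        destruct (Hbc a1) as [B1 C1], (Hbc a2) as [B2 C2], (Hbc a3) as [B3 C3].
        pose proof (ws _ _ _ H) as W.
        destruct (g_ex _ _ _ _ _ _ _ _ C1 C2 W) as [X [B [_ [HB _]]]].
        destruct (g_ex _ _ _ _ _ _ _ _ B1 B2 HB) as [Y [Z [HY [HZ HYZ]]]].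
        assert (Y = y a3) as -> by (eapply g_fn; [exact HY| apply ys; exact H]).
        assert (Z = z a3) as -> by (eapply g_fn; [exact HZ| apply zs; exact H]).
        assert (B = bc a3) as -> by (eapply g_fn; [exact HYZ| exact B3]).
        exact HB.
      - intro a. apply (g_le_trans G _ (w a)); [|apply wl].
        destruct (Hbc a) as [_ C]. exists (x a). apply g_cm; exact C. }
    exists (exist _ bc Hin). simpl. split; intro a; apply Hbc.
  - intro x.
    assert (Hc : forall a, exists w, osum G (proj1_sig x a) w (h a))
      by (intro a; apply (proj2 (proj2 (proj2_sig x)))).
    set (yf := fun a => proj1_sig (constructive_indefinite_description _ (Hc a))).
    assert (Hy : forall a, osum G (proj1_sig x a) (yf a) (h a))
      by (intro a; unfold yf; exact (proj2_sig (constructive_indefinite_description _ (Hc a)))).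
    destruct x as [x [x0 [xs xl]]]; simpl in *.
    assert (Hin : in_Hh E G h yf).
    { split; [|split].
      - pose proof (Hy (ezero E)) as B. rewrite x0, (hom_zero E G h Hh) in B.
        eapply g_cancel; [exact B| apply ea_sum0].
      - intros a1 a2 a3 H.
        pose proof (proj2 Hh _ _ _ H) as W.
        destruct (g_ex _ _ _ _ _ _ _ _ (Hy a1) (Hy a2) W) as [X [Y [HX [HY HXY]]]].
        assert (X = x a3) as -> by (eapply g_fn; [exact HX| apply xs; exact H]).
        assert (Y = yf a3) as -> by (eapply g_cancel; [exact HXY| apply Hy]).
        exact HY.
      - intro a. exists (x a). apply g_cm, Hy. }
    exists (exist _ yf Hin). simpl. split; [exact Hy|].
    intros [y' py'] H'. apply (Hh_ext E G h Hh). simpl in *. intro a.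
    eapply g_cancel; [apply Hy| apply H'].
  - intro a. apply ea_sum0.
  - intros x c H. apply (Hh_ext E G h Hh). simpl. intro a.
    destruct (proj2 (proj2 (proj2_sig c)) a) as [d Hd]. pose proof (H a) as Hx. apply g_cm in Hx. simpl in Hx.
    destruct (g_as _ _ _ _ _ _ Hx Hd) as [xd [Hxd1 Hxd2]].
    assert (xd = ezero G) as -> by (eapply g_cancel; [exact Hxd2| apply ea_sum0]).
    eapply g_pos; exact Hxd1.
Qed.

Lemma bihom_comp (E F T G : EA) (t : E -> F -> T) (k : T -> G) :
  is_bihom E F T t -> is_hom T G k -> is_bihom E F G (fun a b => k (t a b)).
Proof.
  intros [H1 [H2 H3]] Hk. pose proof (hom_zero _ _ _ Hk) as Hk0.
  split; [|split].
  - intro a. destruct (H1 a) as [A B]. split; [rewrite A; exact Hk0|].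
    intros b c d H. apply (proj2 Hk). apply B; exact H.
  - intro b. destruct (H2 b) as [A B]. split; [rewrite A; exact Hk0|].
    intros a c d H. apply (proj2 Hk). apply B; exact H.
  - rewrite H3. apply Hk.
Qed.

Theorem theorem3p3 : forall (E : EA),
  (* [E,G]_h is an effect algebra for every object h : E -> G of E|EA *)
  (forall (G : EA) (h : E -> G) (Hh : is_hom E G h), is_EA (Hh_PA E G h Hh)) /\
  (* for a tensor product (T,t) of E and F, morphisms iota_{E,F} -> h
     (homs k : T -> G with k (a (x) 1) = h a) correspond bijectively to
     homs F -> [E,G]_h via k |-> (b |-> k (- (x) b)) *)
  (forall (F T : EA) (t : E -> F -> T), is_tensor E F T t ->
   forall (G : EA) (h : E -> G) (Hh : is_hom E G h),
     (forall k : T -> G, is_hom T G k -> (forall a, k (t a (eone F)) = h a) ->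
        exists phi : F -> Hh_PA E G h Hh, is_hom F (Hh_PA E G h Hh) phi /\
          forall b a, proj1_sig (phi b) a = k (t a b)) /\
     (forall phi : F -> Hh_PA E G h Hh, is_hom F (Hh_PA E G h Hh) phi ->
        exists k : T -> G, is_hom T G k /\ (forall a, k (t a (eone F)) = h a) /\
          forall b a, k (t a b) = proj1_sig (phi b) a) /\
     (forall k1 k2 : T -> G, is_hom T G k1 -> is_hom T G k2 ->
        (forall a b, k1 (t a b) = k2 (t a b)) -> k1 = k2)).
Proof.
  intro E. split; [exact (Hh_is_EA E)|].
  intros F T t [Ht Hu] G h Hh. split; [|split].
  - intros k Hk Hkh.
    pose proof (bihom_comp _ _ _ _ t k Ht Hk) as [B1 [B2 B3]].
    assert (Hin : forall b, in_Hh E G h (fun a => k (t a b))).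
    { intro b. split; [|split].
      - apply (B2 b).
      - intros. apply (proj2 (B2 b)); assumption.
      - intro a. destruct (ea_ax F) as [_ [_ [_ [Hcomp _]]]].
        destruct (Hcomp b) as [b' [Hb' _]]. exists (k (t a b')).
        rewrite <- Hkh. apply (proj2 (B1 a)); exact Hb'. }
    exists (fun b => exist _ (fun a => k (t a b)) (Hin b)). split.
    + split.
      * apply (Hh_ext E G h Hh). simpl. exact Hkh.
      * simpl. intros b c d H a. apply (proj2 (B1 a)); exact H.
    + reflexivity.
  - intros phi [P1 P2].
    set (beta := fun a b => proj1_sig (phi b) a).
    assert (Hb : is_bihom E F G beta).
    { split; [|split].
      - intro a. split.
        + unfold beta. apply ea_idem0. apply (P2 _ _ _ (ea_sum0 F (ezero F))).
        + intros b c d H. exact (P2 _ _ _ H a).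
      - intro b. split.
        + apply (proj2_sig (phi b)).
        + intros a c d H. apply (proj2_sig (phi b)); exact H.
      - unfold beta. rewrite P1. simpl. apply Hh. }
    destruct (Hu G beta Hb) as [k [[Hk Hkt] _]].
    exists k. split; [exact Hk|split].
    + intro a. rewrite Hkt. unfold beta. rewrite P1. reflexivity.
    + intros b a. rewrite Hkt. reflexivity.
  - intros k1 k2 Hk1 Hk2 Heq.
    destruct (Hu G (fun a b => k1 (t a b)) (bihom_comp _ _ _ _ t k1 Ht Hk1))
      as [k [_ Huniq]].
    transitivity k; [symmetry|]; apply Huniq; split; auto.
Qed.
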